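(* Let $\psi\in C^1((0,\infty))$, $d>0$, and let $G=(V,E)$ be a finite graph with heat semigroup $(P_t)_{t\ge0}$. The following are equivalent: (1) $G$ satisfies $CD\psi(d,0)$. (2) For all $f\in C^+(V)$ and all $t\ge0$, \[ P_tf\;\Delta^\psi P_tf\ \ge\ P_t\!\left(f\,\Delta^\psi f\right)\left(1+\frac{2t}{d}\,\Delta^\psi P_tf\right). \] Moreover, if these hold, then $-\Delta^\psi P_tf\le\frac{d}{2t}$ for all $f\in C^+(V)$ and all $t>0$.
   Context: A finite graph $G=(V,E)$: finite set $V$, irreflexive symmetric relation $E$; $v\sim w$ iff $(v,w)\in E$. $C(V)$: real functions on $V$; $C^+(V)$: positive ones. Laplacian $\Delta f(v)=\sum_{w\sim v}(f(w)-f(v))$. Heat semigroup: $P_tf:=e^{t\Delta}f=\sum_{k\ge0}\frac{t^k\Delta^kf}{k!}$ for $t\ge0$ (it maps positive functions to positive functions). For $f\in C^+(V)$: $(\Delta^\psi f)(v):=\Delta\big[\psi\big(\tfrac{f}{f(v)}\big)\big](v)$; $(\Omega^\psi f)(v):=\Delta\Big[\psi'\big(\tfrac{f}{f(v)}\big)\cdot\tfrac{f}{f(v)}\cdot\big(\tfrac{\Delta f}{f}-\tfrac{(\Delta f)(v)}{f(v)}\big)\Big](v)$; $2\Gamma_2^\psi(f):=\Omega^\psi f+\frac{\Delta f\,\Delta^\psi f}{f}-\frac{\Delta(f\,\Delta^\psi f)}{f}$. $G$ satisfies $CD\psi(d,0)$ if $\Gamma_2^\psi(f)\ge\frac1d(\Delta^\psi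 f)^2$ for all $f\in C^+(V)$. All inequalities are pointwise on $V$. *)

(* Defs.v *)
From Stdlib Require Import Reals Lra ClassicalEpsilon Factorial.
Open Scope R_scope.

(* A finite graph on the vertex set V = {0, ..., n-1} is given by a boolean
   adjacency relation adj, assumed symmetric and irreflexive on V.
   Functions on V are represented as functions nat -> R; only their values on
   V matter. *)

Definition is_graph (n : nat) (adj : nat -> nat -> bool) : Prop :=
  (forall v, (v < n)%nat -> adj v v = false) /\
  (forall v w, (v < n)%nat -> (w < n)%nat -> adj v w = adj w v).

Fixpoint sumV (n : nat) (g : nat -> R) : R :=
  match n with
  | O => 0
  | S m => sumV m g + g m
  end.

Definition Lap (n : nat) (adj : nat -> nat -> bool) (f : nat -> R) (v : nat) : R :=
  sumV n (fun w => if adj v w then f w - f v else 0).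

Fixpoint LapPow (n : nat) (adj : nat -> nat -> bool) (k : nat) (f : nat -> R) : nat -> R :=
  match k with
  | O => f
  | S j => Lap n adj (LapPow n adj j f)
  end.

(* Heat semigroup P_t f = sum_{k>=0} t^k Lap^k f / k!  (the series converges;
   its sum is selected by the choice operator). *)
Definition heat (n : nat) (adj : nat -> nat -> bool) (t : R) (f : nat -> R) (v : nat) : R :=
  epsilon (inhabits 0)
    (fun l => infinite_sum (fun k => t ^ k * LapPow n adj k f v / INR (fact k)) l).

Definition posfun (n : nat) (f : nat -> R) : Prop := forall v, (v < n)%nat -> 0 < f v.

Definition DeltaPsi (n : nat) (adj : nat -> nat -> bool) (psi : R -> R)
  (f : nat -> R) (v : nat) : R :=
  Lap n adj (fun w => psi (f w / f v)) v.

Definition OmegaPsi (n : nat) (adj : nat -> nat -> bool) (dpsi : R -> R)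
  (f : nat -> R) (v : nat) : R :=
  Lap n adj (fun w => dpsi (f w / f v) * (f w / f v) *
                      (Lap n adj f w / f w - Lap n adj f v / f v)) v.

Definition Gamma2Psi (n : nat) (adj : nat -> nat -> bool) (psi dpsi : R -> R)
  (f : nat -> R) (v : nat) : R :=
  (OmegaPsi n adj dpsi f v
   + Lap n adj f v * DeltaPsi n adj psi f v / f v
   - Lap n adj (fun w => f w * DeltaPsi n adj psi f w) v / f v) / 2.

Definition CDpsi (n : nat) (adj : nat -> nat -> bool) (psi dpsi : R -> R) (d : R) : Prop :=
  forall f, posfun n f -> forall v, (v < n)%nat ->
    Gamma2Psi n adj psi dpsi f v >= / d * (DeltaPsi n adj psi f v) ^ 2.

(* Main.v *)
Require Import Defs.
From Stdlib Require Import Reals Lra Lia Psatz ClassicalEpsilon Factorial.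
From Coquelicot Require Import Coquelicot.
Open Scope R_scope.


Lemma D_eq (f : R -> R) (x l l' : R) : is_derive f x l -> l = l' -> is_derive f x l'.
Proof. intros H ->; exact H. Qed.
Lemma D_plus (f g : R -> R) (x a b : R) : is_derive f x a -> is_derive g x b ->
  is_derive (fun y => f y + g y) x (a + b).
Proof. intros; apply (is_derive_plus f g); auto. Qed.
Lemma D_minus (f g : R -> R) (x a b : R) : is_derive f x a -> is_derive g x b ->
  is_derive (fun y => f y - g y) x (a - b).
Proof. intros; apply (is_derive_minus f g); auto. Qed.
Lemma D_mult (f g : R -> R) (x a b : R) : is_derive f x a -> is_derive g x b ->
  is_derive (fun y => f y * g y) x (a * g x + f x * b).
Proof. intros; apply (is_derive_mult f g); auto. intros; apply Rmult_comm. Qed.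
Lemma D_const (c x : R) : is_derive (fun _ => c) x 0.
Proof. apply (is_derive_const c x). Qed.
Lemma D_id (x : R) : is_derive (fun y => y) x 1.
Proof. apply (is_derive_id x). Qed.
Lemma D_comp (f g : R -> R) (x a b : R) : is_derive f (g x) a -> is_derive g x b ->
  is_derive (fun y => f (g y)) x (b * a).
Proof. intros; apply (is_derive_comp f g); auto. Qed.

Lemma sumV_ext m g h : (forall w, (w < m)%nat -> g w = h w) -> sumV m g = sumV m h.
Proof. induction m; simpl; intros H; auto. rewrite IHm by (intros; apply H; lia). rewrite H by lia; auto. Qed.
Lemma sumV_plus m g h : sumV m (fun w => g w + h w) = sumV m g + sumV m h.
Proof. induction m; simpl; [lra|rewrite IHm; lra]. Qed.
Lemma sumV_minus m g h : sumV m (fun w => g w - h w) = sumV m g - sumV m h.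
Proof. induction m; simpl; [lra|rewrite IHm; lra]. Qed.
Lemma sumV_scal m c g : sumV m (fun w => c * g w) = c * sumV m g.
Proof. induction m; simpl; [lra|rewrite IHm; lra]. Qed.
Lemma sumV_const m c : sumV m (fun _ => c) = INR m * c.
Proof. induction m; simpl sumV; [simpl; lra|rewrite IHm, S_INR; lra]. Qed.
Lemma sumV_zero m : sumV m (fun _ => 0) = 0.
Proof. rewrite sumV_const; lra. Qed.
Lemma sumV_le m g h : (forall w, (w < m)%nat -> g w <= h w) -> sumV m g <= sumV m h.
Proof. induction m; simpl; intros H; [lra|]. specialize (IHm ltac:(intros; apply H; lia)). specialize (H m ltac:(lia)); lra. Qed.
Lemma sumV_nonneg m g : (forall w, (w < m)%nat -> 0 <= g w) -> 0 <= sumV m g.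
Proof. intros H. rewrite <- (sumV_zero m). apply sumV_le; auto. Qed.
Lemma sumV_abs m g : Rabs (sumV m g) <= sumV m (fun w => Rabs (g w)).
Proof. induction m; simpl. rewrite Rabs_R0; lra.
  eapply Rle_trans; [apply Rabs_triang|]. lra. Qed.
Lemma sumV_term m g v : (forall w, (w < m)%nat -> 0 <= g w) -> (v < m)%nat -> g v <= sumV m g.
Proof. induction m; simpl; intros H Hv; [lia|].
  destruct (Nat.eq_dec v m) as [->|Hne].
  - assert (0 <= sumV m g) by (apply sumV_nonneg; intros; apply H; lia). lra.
  - assert (g v <= sumV m g) by (apply IHm; [intros; apply H; lia|lia]).
    specialize (H m ltac:(lia)); lra. Qed.
Lemma sumV_swap m k (F : nat -> nat -> R) :
  sumV m (fun v => sumV k (fun w => F v w)) = sumV k (fun w => sumV m (fun v => F v w)).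
Proof. induction m; simpl. rewrite sumV_zero; auto.
  rewrite IHm, <- sumV_plus; auto. Qed.
Lemma sumV_delta m (c : nat -> R) v : (v < m)%nat ->
  sumV m (fun w => if Nat.eqb v w then c w else 0) = c v.
Proof. induction m; simpl; intros Hv; [lia|].
  destruct (Nat.eq_dec v m) as [->|Hne].
  - rewrite Nat.eqb_refl. rewrite (sumV_ext m _ (fun _ => 0)). rewrite sumV_zero; lra.
    intros w Hw. destruct (Nat.eqb_spec m w); auto; lia.
  - rewrite IHm by lia. destruct (Nat.eqb_spec v m); [lia|lra]. Qed.
Lemma sumV_derive m (F : R -> nat -> R) (F' : nat -> R) (x : R) :
  (forall w, (w < m)%nat -> is_derive (fun y => F y w) x (F' w)) ->
  is_derive (fun y => sumV m (F y)) x (sumV m F').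
Proof. induction m; simpl; intros H. apply D_const.
  apply D_plus; [apply IHm; intros; apply H; lia| apply H; lia]. Qed.


Lemma pow_fact_exp y k : 0 <= y -> y ^ k / INR (fact k) <= exp y.
Proof.
  intros Hy. pose proof (is_exp_Reals y) as H.
  unfold is_pseries in H. apply is_series_Reals in H.
  set (s := fun k0 : nat => scal (pow_n y k0) (/ INR (fact k0))) in H.
  assert (Hs : forall k0, s k0 = y ^ k0 / INR (fact k0)).
  { intros; unfold s; rewrite pow_n_pow; reflexivity. }
  assert (Hnn : forall k0, 0 <= s k0).
  { intros; rewrite Hs. apply Rmult_le_pos; [apply pow_le; auto|].
    apply Rlt_le, Rinv_0_lt_compat, INR_fact_lt_0. }
  assert (Hg : Un_growing (sum_f_R0 s)).
  { intro m. simpl. specialize (Hnn (S m)). lra. }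
  pose proof (growing_ineq _ _ Hg H k) as H1.
  rewrite <- Hs. eapply Rle_trans; [|exact H1].
  destruct k; simpl; [lra|].
  assert (0 <= sum_f_R0 s k) by (apply cond_pos_sum; auto). lra.
Qed.

Lemma radius_inf (a : nat -> R) :
  (forall r, exists M, forall k, Rabs (a k * r ^ k) <= M) ->
  forall x, Rbar_lt (Rabs x) (CV_radius a).
Proof.
  intros H x. destruct (CV_radius_bounded a) as [Hub _].
  specialize (Hub (Rabs x + 1) (H _)).
  destruct (CV_radius a); simpl in *; auto; lra.
Qed.

Lemma is_series_zero : is_series (fun _ : nat => 0) 0.
Proof. apply is_series_Reals. intros e He. exists O. intros m _.
  assert (sum_f_R0 (fun _ => 0) m = 0) as ->.
  { induction m; simpl; auto; rewrite IHm; ring. }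
  unfold Rdist; rewrite Rminus_0_r, Rabs_R0; lra. Qed.

Section Mat.
Variable n : nat.
Variable M : nat -> nat -> R.

Definition Mop (g : nat -> R) (v : nat) : R := sumV n (fun w => M v w * g w).
Fixpoint Mpow (k : nat) (g : nat -> R) : nat -> R :=
  match k with O => g | S j => Mop (Mpow j g) end.
Definition Nrm (g : nat -> R) : R := sumV n (fun w => Rabs (g w)).
Definition coef (g : nat -> R) (v : nat) (k : nat) : R := Mpow k g v / INR (fact k).
Definition hs (t : R) (g : nat -> R) (v : nat) : R := PSeries (coef g v) t.

Lemma Mop_ext g h v : (forall w, (w < n)%nat -> g w = h w) -> Mop g v = Mop h v.
Proof. intros H; unfold Mop; apply sumV_ext; intros; rewrite H; auto. Qed.
Lemma Mop_lin a g h v : Mop (fun w => a * g w + h w) v = a * Mop g v + Mop h v.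
Proof. unfold Mop. rewrite <- sumV_scal, <- sumV_plus. apply sumV_ext; intros; ring. Qed.
Lemma Mpow_ext k g h v : (forall w, (w < n)%nat -> g w = h w) -> (v < n)%nat ->
  Mpow k g v = Mpow k h v.
Proof. intros H. revert v; induction k; simpl; intros v Hv; auto.
  apply Mop_ext; intros; auto. Qed.
Lemma Mpow_lin k a g h v : Mpow k (fun w => a * g w + h w) v = a * Mpow k g v + Mpow k h v.
Proof. revert v; induction k; simpl; intros v; auto.
  rewrite <- Mop_lin. apply Mop_ext; intros; auto. Qed.
Lemma Mpow_S k g v : Mpow (S k) g v = Mpow k (Mop g) v.
Proof. revert v; induction k; intros v; auto.
  change (Mop (Mpow (S k) g) v = Mop (Mpow k (Mop g)) v).
  apply Mop_ext; intros; auto. Qed.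

Definition Bv (v : nat) := sumV n (fun w => Rabs (M v w)).
Definition BB := sumV n Bv.
Lemma Bv_nonneg v : 0 <= Bv v.
Proof. apply sumV_nonneg; intros; apply Rabs_pos. Qed.
Lemma BB_nonneg : 0 <= BB.
Proof. apply sumV_nonneg; intros; apply Bv_nonneg. Qed.
Lemma Nrm_nonneg g : 0 <= Nrm g.
Proof. apply sumV_nonneg; intros; apply Rabs_pos. Qed.
Lemma abs_le_Nrm g w : (w < n)%nat -> Rabs (g w) <= Nrm g.
Proof. intros; apply (sumV_term n (fun w => Rabs (g w))); auto; intros; apply Rabs_pos. Qed.
Lemma Mop_bound g v : Rabs (Mop g v) <= Bv v * Nrm g.
Proof. unfold Mop, Bv. eapply Rle_trans; [apply sumV_abs|].
  rewrite Rmult_comm, <- sumV_scal. apply sumV_le; intros w Hw.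
  rewrite Rabs_mult, (Rmult_comm (Nrm g)).
  apply Rmult_le_compat_l; [apply Rabs_pos|apply abs_le_Nrm; auto]. Qed.
Lemma Nrm_Mop g : Nrm (Mop g) <= BB * Nrm g.
Proof. unfold Nrm at 1, BB. rewrite Rmult_comm, <- sumV_scal.
  apply sumV_le; intros w Hw. rewrite Rmult_comm; apply Mop_bound. Qed.
Lemma Nrm_Mpow k g : Nrm (Mpow k g) <= BB ^ k * Nrm g.
Proof. induction k; simpl. lra.
  eapply Rle_trans; [apply Nrm_Mop|]. rewrite Rmult_assoc.
  apply Rmult_le_compat_l; [apply BB_nonneg|auto]. Qed.
Lemma Mpow_bound k g v :
  Rabs (Mpow k g v) <= (Rabs (g v) + Bv v * Nrm g) * (BB + 1) ^ k.
Proof.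
  pose proof (Bv_nonneg v). pose proof (Nrm_nonneg g). pose proof BB_nonneg.
  assert (Hp : 1 <= (BB + 1) ^ k) by (apply pow_R1_Rle; lra).
  destruct k; simpl.
  - simpl in Hp. assert (0 <= Bv v * Nrm g) by (apply Rmult_le_pos; auto). lra.
  - eapply Rle_trans; [apply Mop_bound|].
    pose proof (Nrm_Mpow k g).
    assert (BB ^ k <= (BB + 1) ^ k) by (apply pow_incr; lra).
    assert (0 <= BB ^ k) by (apply pow_le; lra).
    assert (Bv v * Nrm (Mpow k g) <= Bv v * (Nrm g * (BB+1)^k)).
    { apply Rmult_le_compat_l; auto. eapply Rle_trans; [exact H2|].
      rewrite Rmult_comm. apply Rmult_le_compat_l; auto. }
    assert (0 <= Rabs (g v)) by apply Rabs_pos.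
    assert (0 <= (BB+1)^k) by lra.
    eapply Rle_trans; [exact H5|].
    set (Q := (BB+1)^k) in *. set (X := Bv v * Nrm g).
    assert (0 <= X) by (unfold X; apply Rmult_le_pos; auto).
    replace (Bv v * (Nrm g * Q)) with (X * Q) by (unfold X; ring).
    assert (X * Q <= X * ((BB+1) * Q)) by (apply Rmult_le_compat_l; auto; nra).
    assert (0 <= Rabs (g v) * ((BB+1) * Q)) by (apply Rmult_le_pos; auto; nra).
    lra.
Qed.

Lemma coef_radius g v x : Rbar_lt (Rabs x) (CV_radius (coef g v)).
Proof.
  apply radius_inf. intros r.
  set (C := Rabs (g v) + Bv v * Nrm g). set (Q := BB + 1).
  exists (C * exp (Q * Rabs r)). intros k.
  unfold coef, Rdiv. rewrite Rabs_mult, Rabs_mult, Rabs_Rinv by apply INR_fact_neq_0.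
  rewrite (Rabs_right (INR (fact k))) by (apply Rle_ge, pos_INR).
  rewrite <- RPow_abs.
  pose proof (Mpow_bound k g v). fold C Q in H.
  pose proof (pow_fact_exp (Q * Rabs r) k).
  pose proof BB_nonneg.
  assert (0 <= Q * Rabs r) by (apply Rmult_le_pos; [unfold Q; lra|apply Rabs_pos]).
  specialize (H0 H2). rewrite Rpow_mult_distr in H0.
  assert (0 < / INR (fact k)) by (apply Rinv_0_lt_compat, INR_fact_lt_0).
  assert (0 <= Rabs r ^ k) by (apply pow_le, Rabs_pos).
  assert (0 <= C) by (unfold C; pose proof (Bv_nonneg v); pose proof (Nrm_nonneg g);
     pose proof (Rabs_pos (g v)); nra).
  unfold Rdiv in H0.
  apply Rle_trans with (C * Q ^ k * / INR (fact k) * Rabs r ^ k).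
  { apply Rmult_le_compat_r; auto. apply Rmult_le_compat_r; lra. }
  replace (C * Q ^ k * / INR (fact k) * Rabs r ^ k) with (C * (Q ^ k * Rabs r ^ k * / INR (fact k))) by ring.
  apply Rmult_le_compat_l; auto.
Qed.

Lemma coef_ex g v x : ex_pseries (coef g v) x.
Proof. apply CV_radius_inside, coef_radius. Qed.

Lemma hs_0 g v : hs 0 g v = g v.
Proof. unfold hs. rewrite PSeries_0. unfold coef; simpl; field. Qed.

Lemma hs_lin t a g h v : hs t (fun w => a * g w + h w) v = a * hs t g v + hs t h v.
Proof.
  unfold hs. rewrite <- PSeries_scal. rewrite <- PSeries_plus.
  - apply PSeries_ext. intros k. unfold coef, PS_plus, PS_scal. simpl.
    rewrite Mpow_lin. change plus with Rplus. change scal with Rmult. simpl.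
    unfold mult; simpl. field. apply INR_fact_neq_0.
  - apply ex_pseries_scal. apply Rmult_comm. apply coef_ex.
  - apply coef_ex.
Qed.

Lemma hs_ext t g h v : (forall w, (w < n)%nat -> g w = h w) -> (v < n)%nat ->
  hs t g v = hs t h v.
Proof. intros H Hv. unfold hs. apply PSeries_ext. intros k; unfold coef.
  rewrite (Mpow_ext k g h v); auto. Qed.

Lemma hs_derive t g v : is_derive (fun s => hs s g v) t (hs t (Mop g) v).
Proof.
  unfold hs. eapply D_eq. apply is_derive_PSeries, coef_radius.
  apply PSeries_ext. intros k. unfold PS_derive, coef.
  rewrite <- Mpow_S. rewrite fact_simpl, mult_INR. field.
  split; [apply INR_fact_neq_0| apply not_0_INR; lia].
Qed.

Lemma sum_PSeries m (c : nat -> R) (a : nat -> nat -> R) t :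
  (forall w, (w < m)%nat -> ex_pseries (a w) t) ->
  ex_pseries (fun k => sumV m (fun w => c w * a w k)) t /\
  sumV m (fun w => c w * PSeries (a w) t) = PSeries (fun k => sumV m (fun w => c w * a w k)) t.
Proof.
  induction m; intros H; simpl.
  - split. + eapply ex_series_ext; [|exists 0; apply is_series_zero]. intros k; simpl.
      change scal with Rmult; simpl; unfold mult; simpl; ring.
    + rewrite PSeries_const_0; auto.
  - destruct IHm as [H1 H2]; [intros; apply H; lia|].
    assert (H3 : ex_pseries (PS_scal (c m) (a m)) t).
    { apply ex_pseries_scal; [apply Rmult_comm|apply H; lia]. }
    split.
    + eapply ex_series_ext; [|apply (ex_pseries_plus _ _ _ H1 H3)].
      intros k; simpl. unfold PS_plus, PS_scal. change scal with Rmult; change plus with Rplus; simpl.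
      unfold mult; simpl. ring.
    + rewrite H2. rewrite <- PSeries_scal. rewrite <- PSeries_plus by auto.
      apply PSeries_ext. intros k; unfold PS_plus, PS_scal. change scal with Rmult; change plus with Rplus; simpl.
      unfold mult; simpl. ring.
Qed.

Lemma Mop_hs t g v : Mop (fun w => hs t g w) v = hs t (Mop g) v.
Proof.
  unfold hs. change (Mop (fun w => PSeries (coef g w) t) v) with (sumV n (fun w => M v w * PSeries (coef g w) t)).
  destruct (sum_PSeries n (M v) (coef g) t) as [_ ->].
  - intros; apply coef_ex.
  - apply PSeries_ext. intros k. unfold coef.
    rewrite <- Mpow_S. simpl. unfold Mop, Rdiv. rewrite Rmult_comm, <- sumV_scal.
    apply sumV_ext; intros; ring.
Qed.

Lemma hs_derive' t g v : is_derive (fun s => hs s g v) t (Mop (fun w => hs t g w) v).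
Proof. rewrite Mop_hs. apply hs_derive. Qed.

Hypothesis Mnn : forall v w, (v < n)%nat -> (w < n)%nat -> 0 <= M v w.
Lemma Mpow_nonneg k g v : (forall w, (w < n)%nat -> 0 <= g w) -> (v < n)%nat -> 0 <= Mpow k g v.
Proof. intros H. revert v; induction k; simpl; intros v Hv; auto.
  apply sumV_nonneg; intros w Hw. apply Rmult_le_pos; auto. Qed.
Lemma hs_ge t g v : 0 <= t -> (forall w, (w < n)%nat -> 0 <= g w) -> (v < n)%nat -> g v <= hs t g v.
Proof.
  intros Ht H Hv. unfold hs, PSeries.
  assert (Hex : ex_series (fun k => coef g v k * t ^ k)).
  { destruct (coef_ex g v t) as [l Hl]. exists l. eapply is_series_ext; [|exact Hl].
    intros k; simpl; rewrite pow_n_pow; change scal with Rmult; simpl; unfold mult; simpl; ring. }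
  rewrite Series_incr_1 by auto.
  assert (0 <= Series (fun k => coef g v (S k) * t ^ S k)).
  { assert (Hz : Series (fun _ : nat => 0) = 0).
    { apply is_series_unique. apply is_series_zero. }
    rewrite <- Hz. apply Series_le.
    - intros k; split; [lra|]. unfold coef. apply Rmult_le_pos; [|apply pow_le; auto].
      apply Rmult_le_pos; [apply Mpow_nonneg; auto|apply Rlt_le, Rinv_0_lt_compat, INR_fact_lt_0].
    - apply (ex_series_incr_1 (fun k => coef g v k * t ^ k)). auto. }
  replace (coef g v 0 * t ^ 0) with (g v) by (unfold coef; simpl; field). lra.
Qed.
End Mat.


Lemma D_cont (f : R -> R) x l : is_derive f x l -> continuity_pt f x.
Proof. intros H. apply is_derive_Reals in H.
  apply (derivable_continuous_pt f x (exist _ l H)). Qed.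

Lemma mono_nonincr (f df : R -> R) a b : a <= b ->
  (forall x, a <= x <= b -> is_derive f x (df x)) ->
  (forall x, a <= x <= b -> df x <= 0) -> f b <= f a.
Proof.
  intros Hab Hd Hn. destruct (MVT_gen f a b df) as [c [Hc Heq]].
  - intros x Hx. apply Hd. rewrite Rmin_left, Rmax_right in Hx by lra. lra.
  - intros x Hx. rewrite Rmin_left, Rmax_right in Hx by lra. eapply D_cont, Hd; lra.
  - rewrite Rmin_left, Rmax_right in Hc by lra. specialize (Hn c Hc). nra.
Qed.
Lemma mono_nondecr (f df : R -> R) a b : a <= b ->
  (forall x, a <= x <= b -> is_derive f x (df x)) ->
  (forall x, a <= x <= b -> 0 <= df x) -> f a <= f b.
Proof.
  intros Hab Hd Hn. assert (- f b <= - f a); [|lra].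
  apply (mono_nonincr (fun x => - f x) (fun x => - df x)); auto.
  - intros x Hx. eapply D_eq. eapply is_derive_ext; [|apply (D_minus (fun _ => 0) f); [apply D_const|apply Hd; auto]].
    intros; simpl; ring. apply Rminus_0_l.
  - intros x Hx; specialize (Hn x Hx); lra.
Qed.

Lemma D_lin (k x : R) : is_derive (fun s => k * s) x k.
Proof. eapply D_eq. apply is_derive_scal, D_id. ring. Qed.
Lemma D_explin (k x : R) : is_derive (fun s => exp (k * s)) x (k * exp (k * x)).
Proof. apply (D_comp exp (fun s => k * s) x (exp (k * x)) k). apply is_derive_exp. apply D_lin. Qed.

Section Graph.
Variable n : nat.
Variable adj : nat -> nat -> bool.

Definition deg (v : nat) : R := sumV n (fun w => if adj v w then 1 else 0).
Definition Lm (v w : nat) : R := (if adj v w then 1 else 0) - (if Nat.eqb v w then deg v else 0).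

Lemma delta_mul (c : R) (g : nat -> R) v :
  (v < n)%nat -> sumV n (fun w => (if Nat.eqb v w then c else 0) * g w) = c * g v.
Proof. intros Hv. rewrite (sumV_ext n _ (fun w => if Nat.eqb v w then c * g w else 0)).
  apply (sumV_delta n (fun w => c * g w)); auto.
  intros w _; destruct (Nat.eqb v w); ring. Qed.

Lemma Lap_Mop g v : (v < n)%nat -> Lap n adj g v = Mop n Lm g v.
Proof.
  intros Hv. unfold Lap, Mop, Lm. symmetry.
  rewrite (sumV_ext n _ (fun w => (if adj v w then 1 else 0) * g w - (if Nat.eqb v w then deg v else 0) * g w)).
  2:{ intros w _; destruct (adj v w), (Nat.eqb v w); ring. }
  rewrite sumV_minus, delta_mul by auto.
  rewrite (sumV_ext n (fun w => if adj v w then g w - g v else 0) (fun w => (if adj v w then 1 else 0) * g w - g v * (if adj v w then 1 else 0))).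
  2:{ intros w _. destruct (adj v w); ring. }
  rewrite sumV_minus, sumV_scal. unfold deg. ring.
Qed.

Lemma LapPow_Mpow k g v : (v < n)%nat -> LapPow n adj k g v = Mpow n Lm k g v.
Proof. revert v; induction k; simpl; intros v Hv; auto.
  rewrite Lap_Mop by auto. apply Mop_ext; intros; auto. Qed.

Lemma heat_hs t g v : (v < n)%nat -> heat n adj t g v = hs n Lm t g v.
Proof.
  intros Hv.
  assert (Hs : infinite_sum (fun k => t ^ k * LapPow n adj k g v / INR (fact k)) (hs n Lm t g v)).
  { apply is_series_Reals. unfold hs, PSeries.
    assert (Hex : ex_series (fun k => coef n Lm g v k * t ^ k)).
    { destruct (coef_ex n Lm g v t) as [l Hl]. exists l. eapply is_series_ext; [|exact Hl].
      intros k; simpl; rewrite pow_n_pow; change scal with Rmult; simpl; unfold mult; simpl; ring. }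
    eapply is_series_ext; [|apply Series_correct; exact Hex].
    intros k; unfold coef. rewrite LapPow_Mpow by auto.
    change (Mpow n Lm k g v / INR (fact k) * t ^ k = t ^ k * Mpow n Lm k g v / INR (fact k)).
    field. apply INR_fact_neq_0. }
  unfold heat.
  pose proof (epsilon_spec (inhabits 0) (fun l => infinite_sum (fun k => t ^ k * LapPow n adj k g v / INR (fact k)) l) (ex_intro _ _ Hs)) as He.
  eapply uniqueness_sum; eauto.
Qed.

Lemma heat_ext t g h v : (forall w, (w < n)%nat -> g w = h w) -> (v < n)%nat ->
  heat n adj t g v = heat n adj t h v.
Proof. intros; rewrite !heat_hs by auto; apply hs_ext; auto. Qed.
Lemma heat_0 g v : (v < n)%nat -> heat n adj 0 g v = g v.
Proof. intros; rewrite heat_hs, hs_0; auto. Qed.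
Lemma heat_lin t a g h v : (v < n)%nat ->
  heat n adj t (fun w => a * g w + h w) v = a * heat n adj t g v + heat n adj t h v.
Proof. intros; rewrite !heat_hs, hs_lin; auto. Qed.
Lemma heat_Lap t g v : (v < n)%nat -> Lap n adj (heat n adj t g) v = heat n adj t (Lap n adj g) v.
Proof. intros Hv. rewrite Lap_Mop by auto. rewrite (Mop_ext n Lm _ (fun w => hs n Lm t g w)).
  2:{ intros; apply heat_hs; auto. }
  rewrite Mop_hs, heat_hs by auto. apply hs_ext; auto. intros; rewrite Lap_Mop; auto. Qed.
Lemma heat_derive t g v : (v < n)%nat ->
  is_derive (fun s => heat n adj s g v) t (heat n adj t (Lap n adj g) v).
Proof. intros Hv. eapply is_derive_ext. intros s; symmetry; apply heat_hs; auto.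
  eapply D_eq. apply hs_derive. rewrite heat_hs by auto. apply hs_ext; auto.
  intros; rewrite Lap_Mop; auto. Qed.
Lemma heat_derive' t g v : (v < n)%nat ->
  is_derive (fun s => heat n adj s g v) t (Lap n adj (heat n adj t g) v).
Proof. intros Hv. rewrite heat_Lap by auto. apply heat_derive; auto. Qed.

Definition cc := INR n.
Definition Am (v w : nat) : R := Lm v w + (if Nat.eqb v w then cc else 0).

Lemma deg_le v : deg v <= cc.
Proof. unfold deg, cc. rewrite <- (Rmult_1_r (INR n)), <- sumV_const.
  apply sumV_le; intros; destruct (adj v w); lra. Qed.
Lemma deg_nonneg v : 0 <= deg v.
Proof. apply sumV_nonneg; intros; destruct (adj v w); lra. Qed.

Lemma Am_nn v w : (v < n)%nat -> (w < n)%nat -> 0 <= Am v w.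
Proof. intros. unfold Am, Lm. destruct (Nat.eqb_spec v w).
  - pose proof (deg_le v). destruct (adj v w); lra.
  - destruct (adj v w); lra. Qed.

Lemma Mop_Am h v : (v < n)%nat -> Mop n Am h v = Mop n Lm h v + cc * h v.
Proof. intros Hv. unfold Mop, Am.
  rewrite <- (delta_mul cc h v Hv), <- sumV_plus. apply sumV_ext; intros; ring. Qed.

Lemma Mop_lin2 (M : nat -> nat -> R) a b g h v :
  Mop n M (fun w => a * g w - b * h w) v = a * Mop n M g v - b * Mop n M h v.
Proof. unfold Mop. rewrite <- !sumV_scal, <- sumV_minus. apply sumV_ext; intros; ring. Qed.

Lemma quad_bound (M : nat -> nat -> R) (D : nat -> R) :
  Rabs (sumV n (fun v => D v * Mop n M D v)) <= BB n M * INR n * sumV n (fun v => D v ^ 2).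
Proof.
  unfold Mop. eapply Rle_trans; [apply sumV_abs|].
  eapply Rle_trans with (sumV n (fun v => sumV n (fun w => BB n M * ((D v ^ 2 + D w ^ 2) / 2)))).
  - apply sumV_le; intros v Hv. rewrite Rabs_mult.
    eapply Rle_trans. apply Rmult_le_compat_l. apply Rabs_pos. apply sumV_abs.
    rewrite <- sumV_scal. apply sumV_le; intros w Hw.
    rewrite Rabs_mult.
    assert (Hm : Rabs (M v w) <= BB n M).
    { eapply Rle_trans with (Bv n M v).
      - apply (sumV_term n (fun w => Rabs (M v w))); auto; intros; apply Rabs_pos.
      - apply (sumV_term n (Bv n M)); auto; intros; apply Bv_nonneg. }
    assert (Hq : Rabs (D v) * Rabs (D w) <= (D v ^ 2 + D w ^ 2) / 2).
    { pose proof (pow2_abs (D v)). pose proof (pow2_abs (D w)).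
      pose proof (pow2_ge_0 (Rabs (D v) - Rabs (D w))). nra. }
    pose proof (Rabs_pos (D v)). pose proof (Rabs_pos (D w)). pose proof (Rabs_pos (M v w)).
    assert (0 <= Rabs (D v) * Rabs (D w)) by (apply Rmult_le_pos; auto).
    nra.
  - rewrite (sumV_ext n _ (fun v => BB n M / 2 * (INR n * D v ^ 2) + BB n M / 2 * sumV n (fun w => D w ^ 2))).
    2:{ intros v _. rewrite (sumV_ext n _ (fun w => BB n M / 2 * D v ^ 2 + BB n M / 2 * D w ^ 2)).
        rewrite sumV_plus, sumV_const, sumV_scal. ring. intros; field. }
    rewrite sumV_plus, !sumV_scal, sumV_const. set (SS := sumV n (fun w => D w ^ 2)). set (XX := BB n M). apply Req_le. field.
Qed.

Lemma heat_Am t g v : 0 <= t -> (v < n)%nat ->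
  heat n adj t g v = exp (- cc * t) * hs n Am t g v.
Proof.
  intros Ht Hv.
  set (D := fun s w => exp (cc * s) * hs n Lm s g w - hs n Am s g w).
  set (E := fun s => sumV n (fun w => D s w ^ 2)).
  set (K := BB n Am * INR n).
  assert (HK : 0 <= K) by (unfold K; apply Rmult_le_pos; [apply BB_nonneg|apply pos_INR]).
  assert (HD : forall s w, (w < n)%nat -> is_derive (fun s => D s w) s (Mop n Am (D s) w)).
  { intros s w Hw. unfold D. eapply D_eq.
    apply D_minus; [apply D_mult; [apply D_explin|apply hs_derive']|apply hs_derive'].
    - rewrite (Mop_ext n Am (fun w0 => exp (cc * s) * hs n Lm s g w0 - hs n Am s g w0) (fun w0 => exp (cc * s) * hs n Lm s g w0 - 1 * hs n Am s g w0)) by (intros; ring).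
      rewrite Mop_lin2, !Mop_Am by auto. unfold Mop; cbv beta; ring. }
  assert (HE : forall s, is_derive E s (sumV n (fun w => 2 * D s w * Mop n Am (D s) w))).
  { intros s. apply sumV_derive. intros w Hw. eapply D_eq.
    apply (D_comp (fun x => x ^ 2) (fun s => D s w)). apply is_derive_pow, is_derive_id.
    apply HD; auto. simpl. change one with 1. ring. }
  set (F := fun s => exp (- (2 * K) * s) * E s).
  assert (HF : forall s, is_derive F s (exp (- (2 * K) * s) * (sumV n (fun w => 2 * D s w * Mop n Am (D s) w) - 2 * K * E s))).
  { intros s. eapply D_eq. apply D_mult; [|apply HE].
    apply D_explin. cbv beta; ring. }
  assert (HF0 : F 0 = 0).
  { unfold F, E. rewrite (sumV_ext n _ (fun _ => 0)). rewrite sumV_zero; ring.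
    intros w Hw. unfold D. rewrite !hs_0. rewrite Rmult_0_r, exp_0. ring. }
  assert (HFt : F t <= F 0).
  { apply (mono_nonincr F (fun s => exp (- (2 * K) * s) * (sumV n (fun w : nat => 2 * D s w * Mop n Am (D s) w) - 2 * K * E s)) 0 t Ht). intros; apply HF.
    intros s _. pose proof (quad_bound Am (D s)).
    rewrite (sumV_ext n _ (fun w => 2 * (D s w * Mop n Am (D s) w))) by (intros; ring).
    rewrite sumV_scal. fold (E s) in H. fold K in H.
    assert (0 < exp (- (2 * K) * s)) by apply exp_pos.
    pose proof (Rle_abs (sumV n (fun v => D s v * Mop n Am (D s) v))).
    assert (2 * sumV n (fun v => D s v * Mop n Am (D s) v) - 2 * K * E s <= 0) by lra.
    nra. }
  assert (HEt : 0 <= E t) by (apply sumV_nonneg; intros; apply pow2_ge_0).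
  assert (HE0 : E t <= 0).
  { rewrite HF0 in HFt. unfold F in HFt. pose proof (exp_pos (- (2 * K) * t)). nra. }
  assert (HDv : D t v ^ 2 <= E t).
  { apply (sumV_term n (fun w => D t w ^ 2)); auto. intros; apply pow2_ge_0. }
  assert (HD0 : D t v = 0) by nra.
  unfold D in HD0. rewrite heat_hs by auto.
  assert (exp (- cc * t) * exp (cc * t) = 1) by (rewrite <- exp_plus; replace (- cc * t + cc * t) with 0 by ring; apply exp_0).
  assert (hs n Lm t g v = exp (- cc * t) * (exp (cc * t) * hs n Lm t g v)) by (rewrite <- Rmult_assoc, H; ring).
  rewrite H0. f_equal. lra.
Qed.

Lemma heat_pos t g v : 0 <= t -> (forall w, (w < n)%nat -> 0 < g w) -> (v < n)%nat ->
  0 < heat n adj t g v.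
Proof. intros Ht Hg Hv. rewrite heat_Am by auto.
  apply Rmult_lt_0_compat; [apply exp_pos|].
  apply Rlt_le_trans with (g v); [apply Hg; auto|]. apply hs_ge; auto. apply Am_nn.
  intros; apply Rlt_le; auto. Qed.
Lemma heat_nonneg t g v : 0 <= t -> (forall w, (w < n)%nat -> 0 <= g w) -> (v < n)%nat ->
  0 <= heat n adj t g v.
Proof. intros Ht Hg Hv. rewrite heat_Am by auto.
  apply Rmult_le_pos; [apply Rlt_le, exp_pos|].
  apply Rle_trans with (g v); [apply Hg; auto|]. apply hs_ge; auto. apply Am_nn. Qed.
End Graph.


Section G4.
Variable n : nat.
Variable adj : nat -> nat -> bool.

Lemma Lap_ext g h v : (forall w, (w < n)%nat -> g w = h w) -> (v < n)%nat ->
  Lap n adj g v = Lap n adj h v.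
Proof. intros H Hv. unfold Lap. apply sumV_ext; intros w Hw. rewrite !H by auto. auto. Qed.
Lemma Lap_lin a g h v : Lap n adj (fun u => a * g u + h u) v = a * Lap n adj g v + Lap n adj h v.
Proof. unfold Lap. rewrite <- sumV_scal, <- sumV_plus. apply sumV_ext; intros w _.
  destruct (adj v w); ring. Qed.
Lemma Lap_zero v : Lap n adj (fun _ => 0) v = 0.
Proof. unfold Lap. rewrite (sumV_ext n _ (fun _ => 0)). apply sumV_zero. intros w _; destruct (adj v w); ring. Qed.

Lemma heat_zero t v : (v < n)%nat -> heat n adj t (fun _ => 0) v = 0.
Proof. intros Hv. pose proof (heat_lin n adj t 1 (fun _ => 0) (fun _ => 0) v Hv).
  rewrite (heat_ext n adj t (fun w => 1 * 0 + 0) (fun _ => 0)) in H by (auto; intros; ring). lra. Qed.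

Lemma heat_sum m t (c : nat -> R) (h : nat -> nat -> R) v : (v < n)%nat ->
  heat n adj t (fun u => sumV m (fun w => c w * h w u)) v = sumV m (fun w => c w * heat n adj t (h w) v).
Proof. intros Hv. induction m; simpl. apply heat_zero; auto.
  rewrite <- IHm. rewrite Rplus_comm, <- heat_lin by auto.
  apply heat_ext; auto. intros; ring. Qed.
Lemma Lap_sum m (c : nat -> R) (h : nat -> nat -> R) v :
  Lap n adj (fun u => sumV m (fun w => c w * h w u)) v = sumV m (fun w => c w * Lap n adj (h w) v).
Proof. induction m; simpl. apply Lap_zero.
  rewrite <- IHm. rewrite Rplus_comm, <- Lap_lin. unfold Lap. apply sumV_ext; intros w _.
  destruct (adj v w); ring. Qed.

Definition delta (w u : nat) : R := if Nat.eqb w u then 1 else 0.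
Lemma delta_sum (g : nat -> R) u : (u < n)%nat -> sumV n (fun w => g w * delta w u) = g u.
Proof. intros Hu. unfold delta. rewrite (sumV_ext n _ (fun w => if Nat.eqb u w then g w else 0)).
  apply sumV_delta; auto. intros w _. rewrite Nat.eqb_sym. destruct (Nat.eqb u w); ring. Qed.

Lemma heat_kernel t g v : (v < n)%nat ->
  heat n adj t g v = sumV n (fun w => g w * heat n adj t (delta w) v).
Proof. intros Hv. rewrite <- heat_sum by auto. apply heat_ext; auto.
  intros u Hu. rewrite delta_sum; auto. Qed.

Lemma heat_back_derive t (H : R -> nat -> R) (H' : nat -> R) s v : (v < n)%nat ->
  (forall w, (w < n)%nat -> is_derive (fun s => H s w) s (H' w)) ->
  is_derive (fun s => heat n adj (t - s) (H s) v) s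
    (heat n adj (t - s) (fun w => H' w - Lap n adj (H s) w) v).
Proof.
  intros Hv HD. eapply is_derive_ext. intros r; symmetry; apply heat_kernel; auto.
  eapply D_eq. apply sumV_derive. intros w Hw. apply D_mult. apply HD; auto.
  apply (D_comp (fun tau => heat n adj tau (delta w) v) (fun s => t - s)).
  apply heat_derive; auto. apply (D_minus (fun _ => t) (fun s => s)). apply D_const. apply D_id.
  assert (E1 : heat n adj (t - s) (fun w => H' w - Lap n adj (H s) w) v =
     heat n adj (t - s) H' v - heat n adj (t - s) (Lap n adj (H s)) v).
  { rewrite (heat_ext n adj (t - s) _ (fun w => (-1) * Lap n adj (H s) w + H' w)) by (auto; intros; ring).
    rewrite heat_lin by auto. ring. }
  rewrite E1.
  rewrite (heat_kernel (t - s) H') by auto.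
  rewrite (heat_ext n adj (t - s) (Lap n adj (H s)) (fun u => sumV n (fun w => H s w * Lap n adj (delta w) u)));
   [| intros u Hu; rewrite <- Lap_sum; apply Lap_ext; auto; intros; rewrite delta_sum; auto | auto].
  rewrite heat_sum by auto.
  rewrite <- sumV_minus. apply sumV_ext. intros w Hw. cbv beta. change (fun u : nat => Lap n adj (delta w) u) with (Lap n adj (delta w)). ring.
Qed.
End G4.


Lemma D_div (f g : R -> R) (x a b : R) : is_derive f x a -> is_derive g x b -> g x <> 0 ->
  is_derive (fun y => f y / g y) x ((a * g x - f x * b) / g x ^ 2).
Proof. intros; apply (is_derive_div f g); auto. Qed.
Lemma D_inv (f : R -> R) (x a : R) : is_derive f x a -> f x <> 0 ->
  is_derive (fun y => / f y) x (- a / f x ^ 2).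
Proof. intros; apply (is_derive_inv f); auto. Qed.

Lemma riccati (Phi Phid : R -> R) k t : 0 < k -> 0 <= t ->
  (forall s, 0 <= s <= t -> is_derive Phi s (Phid s)) ->
  (forall s, 0 <= s <= t -> k * Phi s ^ 2 <= Phid s) ->
  Phi 0 <= Phi t /\ Phi 0 + k * t * Phi 0 * Phi t <= Phi t.
Proof.
  intros Hk Ht HD HB.
  assert (Hmono : forall a b, 0 <= a -> a <= b -> b <= t -> Phi a <= Phi b).
  { intros a b Ha Hab Hb. apply (mono_nondecr Phi Phid a b Hab).
    intros; apply HD; lra. intros x Hx. specialize (HB x ltac:(lra)).
    pose proof (pow2_ge_0 (Phi x)). nra. }
  assert (Hinv : (forall s, 0 <= s <= t -> Phi s <> 0) -> / Phi t + k * t <= / Phi 0 + k * 0).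
  { intros Hnz. apply (mono_nonincr (fun s => / Phi s + k * s) (fun s => - Phid s / Phi s ^ 2 + k) 0 t Ht).
    - intros s Hs. apply D_plus. apply D_inv; auto. apply D_lin.
    - intros s Hs. specialize (HB s Hs). specialize (Hnz s Hs).
      assert (0 < Phi s ^ 2) by (apply pow2_gt_0; auto).
      assert (k <= Phid s / Phi s ^ 2).
      { apply (Rmult_le_reg_r (Phi s ^ 2)); auto. unfold Rdiv. rewrite Rmult_assoc, Rinv_l by lra. lra. }
      unfold Rdiv in *. lra. }
  set (a := Phi 0) in *. set (b := Phi t) in *.
  assert (Hab : a <= b) by (apply Hmono; lra).
  split; auto.
  destruct (Rlt_or_le 0 a) as [Ha|Ha].
  - assert (Hnz : forall s, 0 <= s <= t -> Phi s <> 0).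
    { intros s Hs. assert (a <= Phi s) by (apply Hmono; lra). lra. }
    specialize (Hinv Hnz). rewrite Rmult_0_r, Rplus_0_r in Hinv.
    assert (0 < b) by lra.
    assert (a * b * (/ b + k * t) <= a * b * / a).
    { apply Rmult_le_compat_l; [nra|lra]. }
    replace (a * b * (/ b + k * t)) with (a + k * t * a * b) in H0 by (field; lra).
    replace (a * b * / a) with b in H0 by (field; lra). lra.
  - destruct (Req_dec a 0) as [Ha0|Ha0].
    + rewrite Ha0. lra.
    + destruct (Rlt_or_le b 0) as [Hb|Hb].
      * assert (Hnz : forall s, 0 <= s <= t -> Phi s <> 0).
        { intros s Hs. assert (Phi s <= b) by (apply Hmono; lra). lra. }
        specialize (Hinv Hnz). rewrite Rmult_0_r, Rplus_0_r in Hinv.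
        assert (a * b * (/ b + k * t) <= a * b * / a).
        { apply Rmult_le_compat_l; [nra|lra]. }
        replace (a * b * (/ b + k * t)) with (a + k * t * a * b) in H by (field; lra).
        replace (a * b * / a) with b in H by (field; lra). lra.
      * assert (k * t * a * b <= 0).
        { assert (0 <= k * t) by nra. assert (a * b <= 0) by nra. nra. }
        lra.
Qed.

Lemma deriv_sign (g : R -> R) l : is_derive g 0 l -> g 0 = 0 ->
  (forall t, 0 < t -> 0 <= g t) -> 0 <= l.
Proof.
  intros HD H0 Hp. apply is_derive_Reals in HD.
  destruct (Rlt_or_le l 0) as [Hl|Hl]; auto.
  destruct (HD (- l / 2)) as [del Hdel]. lra.
  assert (Hd0 : 0 < del) by (destruct del; auto).
  specialize (Hdel (del / 2) ltac:(lra)).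
  rewrite Rabs_right in Hdel by lra. specialize (Hdel ltac:(lra)).
  rewrite Rplus_0_l, H0, Rminus_0_r in Hdel.
  specialize (Hp (del / 2) ltac:(lra)).
  assert (0 <= g (del / 2) / (del / 2)) by (apply Rdiv_le_0_compat; lra).
  apply Rabs_def2 in Hdel. lra.
Qed.

Section Main.
Variables psi dpsi : R -> R.
Hypothesis Hpsi : forall x, 0 < x -> derivable_pt_lim psi x (dpsi x).
Variable n : nat.
Variable adj : nat -> nat -> bool.

Lemma DPsi_ext f h v : (forall w, (w < n)%nat -> f w = h w) -> (v < n)%nat ->
  DeltaPsi n adj psi f v = DeltaPsi n adj psi h v.
Proof. intros H Hv. unfold DeltaPsi. apply Lap_ext; auto. intros; rewrite !H; auto. Qed.
Lemma Omega_ext f h v : (forall w, (w < n)%nat -> f w = h w) -> (v < n)%nat ->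
  OmegaPsi n adj dpsi f v = OmegaPsi n adj dpsi h v.
Proof. intros H Hv. unfold OmegaPsi. rewrite (Lap_ext n adj f h v) by auto. apply Lap_ext; auto.
  intros w Hw. rewrite !H by auto. rewrite (Lap_ext n adj f h w) by auto. auto. Qed.

Lemma ratio_derive (G : R -> nat -> R) s u v :
  (u < n)%nat -> (v < n)%nat ->
  (forall w, (w < n)%nat -> is_derive (fun s => G s w) s (Lap n adj (G s) w)) ->
  (forall w, (w < n)%nat -> 0 < G s w) ->
  is_derive (fun s => psi (G s u / G s v)) s
    (dpsi (G s u / G s v) * (G s u / G s v) * (Lap n adj (G s) u / G s u - Lap n adj (G s) v / G s v)).
Proof.
  intros Hu Hv HD Hp. pose proof (Hp u Hu). pose proof (Hp v Hv).
  eapply D_eq. apply (D_comp psi (fun s => G s u / G s v)).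
  apply is_derive_Reals, Hpsi. apply Rdiv_lt_0_compat; auto.
  apply D_div; auto. lra. cbv beta. field. lra.
Qed.

Lemma DPsi_derive (G : R -> nat -> R) s v : (v < n)%nat ->
  (forall w, (w < n)%nat -> is_derive (fun s => G s w) s (Lap n adj (G s) w)) ->
  (forall w, (w < n)%nat -> 0 < G s w) ->
  is_derive (fun s => DeltaPsi n adj psi (G s) v) s (OmegaPsi n adj dpsi (G s) v).
Proof.
  intros Hv HD Hp. unfold DeltaPsi, OmegaPsi, Lap.
  apply (sumV_derive n (fun s w => if adj v w then psi (G s w / G s v) - psi (G s v / G s v) else 0)).
  intros w Hw. destruct (adj v w).
  - apply D_minus; apply ratio_derive; auto.
  - apply D_const.
Qed.

Lemma heat_scal t a g v : (v < n)%nat -> heat n adj t (fun w => a * g w) v = a * heat n adj t g v.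
Proof. intros Hv. rewrite (heat_ext n adj t _ (fun w => a * g w + 0)) by (auto; intros; ring).
  rewrite heat_lin, heat_zero by auto. ring. Qed.
Lemma heat_mono t g h v : 0 <= t -> (v < n)%nat -> (forall w, (w < n)%nat -> g w <= h w) ->
  heat n adj t g v <= heat n adj t h v.
Proof. intros Ht Hv H.
  rewrite (heat_ext n adj t h (fun w => 1 * (h w - g w) + g w)) by (auto; intros; ring).
  rewrite heat_lin by auto.
  assert (0 <= heat n adj t (fun w => h w - g w) v) by (apply heat_nonneg; auto; intros; specialize (H w H0); lra).
  lra. Qed.

Lemma jensen t p q v : 0 <= t -> (v < n)%nat -> (forall w, (w < n)%nat -> 0 < p w) ->
  heat n adj t (fun w => p w * q w) v ^ 2 <= heat n adj t p v * heat n adj t (fun w => p w * q w ^ 2) v.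
Proof.
  intros Ht Hv Hp.
  assert (Hl : forall l, 0 <= l ^ 2 * heat n adj t p v + ((-2 * l) * heat n adj t (fun w => p w * q w) v + heat n adj t (fun w => p w * q w ^ 2) v)).
  { intros l. rewrite <- (heat_lin n adj t (-2 * l) (fun w => p w * q w) (fun w => p w * q w ^ 2)) by auto.
    rewrite <- (heat_lin n adj t (l ^ 2)) by auto.
    apply heat_nonneg; auto. intros w Hw. specialize (Hp w Hw).
    pose proof (pow2_ge_0 (q w - l)).
    replace (l ^ 2 * p w + (-2 * l * (p w * q w) + p w * q w ^ 2)) with (p w * (q w - l) ^ 2) by ring.
    apply Rmult_le_pos; lra. }
  set (A := heat n adj t p v) in *. set (B := heat n adj t (fun w => p w * q w) v) in *.
  set (C := heat n adj t (fun w => p w * q w ^ 2) v) in *.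
  assert (HA : 0 < A) by (apply heat_pos; auto; lra).
  specialize (Hl (B / A)).
  replace ((B / A) ^ 2 * A + (-2 * (B / A) * B + C)) with ((A * C - B ^ 2) / A) in Hl by (field; lra).
  assert (0 <= A * C - B ^ 2).
  { apply (Rmult_le_reg_r (/ A)). apply Rinv_0_lt_compat; auto. rewrite Rmult_0_l. exact Hl. }
  lra.
Qed.

Variable d : R.
Hypothesis Hd : 0 < d.

Lemma key f t v : CDpsi n adj psi dpsi d -> posfun n f -> 0 <= t -> (v < n)%nat ->
  heat n adj t (fun w => f w * DeltaPsi n adj psi f w) v <=
     heat n adj t f v * DeltaPsi n adj psi (heat n adj t f) v /\
  heat n adj t (fun w => f w * DeltaPsi n adj psi f w) v * (1 + 2 * t / d * DeltaPsi n adj psi (heat n adj t f) v)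
    <= heat n adj t f v * DeltaPsi n adj psi (heat n adj t f) v.
Proof.
  intros HCD Hf Ht Hv.
  set (G := fun s => heat n adj s f).
  assert (HGd : forall s w, (w < n)%nat -> is_derive (fun s => G s w) s (Lap n adj (G s) w)).
  { intros; unfold G; apply heat_derive'; auto. }
  assert (HGp : forall s w, 0 <= s -> (w < n)%nat -> 0 < G s w).
  { intros; unfold G; apply heat_pos; auto. }
  set (H := fun s w => G s w * DeltaPsi n adj psi (G s) w).
  set (H' := fun s w => Lap n adj (G s) w * DeltaPsi n adj psi (G s) w + G s w * OmegaPsi n adj dpsi (G s) w).
  assert (HHd : forall s w, 0 <= s -> (w < n)%nat -> is_derive (fun s => H s w) s (H' s w)).
  { intros s w Hs Hw. unfold H, H'. apply D_mult. apply HGd; auto.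
    apply DPsi_derive; auto. }
  set (Phi := fun s => heat n adj (t - s) (H s) v).
  set (Phid := fun s => heat n adj (t - s) (fun w => H' s w - Lap n adj (H s) w) v).
  assert (HPd : forall s, 0 <= s <= t -> is_derive Phi s (Phid s)).
  { intros s Hs. unfold Phi, Phid. apply heat_back_derive; auto. intros; apply HHd; auto; lra. }
  set (c := heat n adj t f v).
  assert (Hc : 0 < c) by (unfold c; apply heat_pos; auto).
  assert (Hconst : forall s, 0 <= s <= t -> heat n adj (t - s) (G s) v = c).
  { intros s Hs.
    assert (HD0 : forall r, 0 <= r <= t -> is_derive (fun s => heat n adj (t - s) (G s) v) r 0).
    { intros r Hr. eapply D_eq. apply heat_back_derive; auto.
      rewrite (heat_ext n adj (t - r) _ (fun _ => 0)) by (auto; intros; ring). apply heat_zero; auto. }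
    assert (E0 : heat n adj (t - 0) (G 0) v = c).
    { rewrite Rminus_0_r. unfold c, G. apply heat_ext; auto. intros; apply heat_0; auto. }
    rewrite <- E0. apply Rle_antisym.
    - apply (mono_nonincr (fun s => heat n adj (t - s) (G s) v) (fun _ => 0) 0 s); try lra.
      intros; apply HD0; lra. intros; lra.
    - apply (mono_nondecr (fun s => heat n adj (t - s) (G s) v) (fun _ => 0) 0 s); try lra.
      intros; apply HD0; lra. intros; lra. }
  set (k := 2 / (d * c)).
  assert (Hk : 0 < k) by (unfold k; apply Rdiv_lt_0_compat; [lra|nra]).
  assert (HPB : forall s, 0 <= s <= t -> k * Phi s ^ 2 <= Phid s).
  { intros s Hs.
    assert (E1 : Phid s = heat n adj (t - s) (fun w => 2 * G s w * Gamma2Psi n adj psi dpsi (G s) w) v).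
    { unfold Phid. apply heat_ext; auto. intros w Hw. unfold H', H, Gamma2Psi.
      assert (0 < G s w) by (apply HGp; auto; lra). field. lra. }
    assert (E2 : heat n adj (t - s) (fun w => 2 / d * (G s w * DeltaPsi n adj psi (G s) w ^ 2)) v <= Phid s).
    { rewrite E1. apply heat_mono; auto; try lra. intros w Hw.
      assert (0 < G s w) by (apply HGp; auto; lra).
      assert (HG2 := HCD (G s) ltac:(intros u Hu; apply HGp; auto; lra) w Hw).
      apply Rge_le in HG2.
      replace (2 / d * (G s w * DeltaPsi n adj psi (G s) w ^ 2)) with (2 * G s w * (/ d * DeltaPsi n adj psi (G s) w ^ 2)) by (field; lra).
      apply Rmult_le_compat_l; auto. lra. }
    rewrite heat_scal in E2 by auto.
    pose proof (jensen (t - s) (G s) (DeltaPsi n adj psi (G s)) v ltac:(lra) Hv ltac:(intros; apply HGp; auto; lra)) as HJ.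
    rewrite Hconst in HJ by auto. fold (H s) in HJ.
    change (heat n adj (t - s) (H s) v) with (Phi s) in HJ.
    replace (k * Phi s ^ 2) with (2 / d * (Phi s ^ 2 / c)) by (unfold k; field; lra).
    eapply Rle_trans; [|exact E2]. apply Rmult_le_compat_l. apply Rlt_le, Rdiv_lt_0_compat; lra.
    apply (Rmult_le_reg_l c); auto. unfold Rdiv. rewrite <- Rmult_assoc, (Rmult_comm c), Rmult_assoc, Rinv_r, Rmult_1_r by lra.
    lra. }
  destruct (riccati Phi Phid k t Hk Ht HPd HPB) as [R1 R2].
  assert (EP0 : Phi 0 = heat n adj t (fun w => f w * DeltaPsi n adj psi f w) v).
  { unfold Phi, H. rewrite Rminus_0_r. apply heat_ext; auto. intros w Hw.
    unfold G. rewrite heat_0 by auto. f_equal. apply DPsi_ext; auto. intros; apply heat_0; auto. }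
  assert (EPt : Phi t = c * DeltaPsi n adj psi (heat n adj t f) v).
  { unfold Phi, H. rewrite Rminus_diag_eq by auto. rewrite heat_0 by auto. reflexivity. }
  rewrite EP0, EPt in *. split; auto.
  eapply Rle_trans; [|exact R2]. apply Req_le. unfold k. field. lra.
Qed.

Lemma converse f v : posfun n f -> (v < n)%nat ->
  (forall t, 0 <= t ->
      heat n adj t f v * DeltaPsi n adj psi (heat n adj t f) v
      >= heat n adj t (fun w => f w * DeltaPsi n adj psi f w) v
         * (1 + 2 * t / d * DeltaPsi n adj psi (heat n adj t f) v)) ->
  Gamma2Psi n adj psi dpsi f v >= / d * (DeltaPsi n adj psi f v) ^ 2.
Proof.
  intros Hf Hv H2.
  set (G := fun s => heat n adj s f).
  set (h := fun w => f w * DeltaPsi n adj psi f w).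
  set (g := fun t => G t v * DeltaPsi n adj psi (G t) v - heat n adj t h v * (1 + 2 * t / d * DeltaPsi n adj psi (G t) v)).
  assert (HG0 : forall w, (w < n)%nat -> G 0 w = f w) by (intros; unfold G; apply heat_0; auto).
  assert (HGd : forall w, (w < n)%nat -> is_derive (fun s => G s w) 0 (Lap n adj (G 0) w)).
  { intros; unfold G; apply heat_derive'; auto. }
  assert (HGp : forall w, (w < n)%nat -> 0 < G 0 w) by (intros; rewrite HG0; auto).
  assert (Hx : is_derive (fun s => DeltaPsi n adj psi (G s) v) 0 (OmegaPsi n adj dpsi (G 0) v)).
  { apply DPsi_derive; auto. }
  assert (Hgd : is_derive g 0
     (Lap n adj (G 0) v * DeltaPsi n adj psi (G 0) v + G 0 v * OmegaPsi n adj dpsi (G 0) v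
      - (Lap n adj (heat n adj 0 h) v * (1 + 2 * 0 / d * DeltaPsi n adj psi (G 0) v)
         + heat n adj 0 h v * (2 / d * DeltaPsi n adj psi (G 0) v + 2 * 0 / d * OmegaPsi n adj dpsi (G 0) v)))).
  { unfold g. eapply D_eq. apply D_minus. apply D_mult. apply HGd; auto. exact Hx.
    apply D_mult. apply heat_derive'; auto.
    apply (D_plus (fun _ => 1) (fun t => 2 * t / d * DeltaPsi n adj psi (G t) v)). apply D_const.
    apply D_mult. eapply is_derive_ext; [|apply (D_lin (2 / d))]. intros; simpl; field; lra. exact Hx.
    cbv beta. field. lra. }
  assert (Hg0 : g 0 = 0).
  { unfold g. rewrite heat_0 by auto. unfold h. rewrite HG0 by auto.
    rewrite (DPsi_ext (G 0) f v) by auto. field. lra. }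
  pose proof (deriv_sign g _ Hgd Hg0) as HS.
  assert (HS' : forall t, 0 < t -> 0 <= g t).
  { intros t Ht. specialize (H2 t ltac:(lra)). unfold g, G, h. lra. }
  specialize (HS HS').
  rewrite (Lap_ext n adj (heat n adj 0 h) h v) in HS by (auto; intros; apply heat_0; auto).
  rewrite heat_0 in HS by auto.
  rewrite (Lap_ext n adj (G 0) f v), HG0, (DPsi_ext (G 0) f v), (Omega_ext (G 0) f v) in HS by auto.
  unfold h in HS. unfold Gamma2Psi. apply Rle_ge.
  pose proof (Hf v Hv).
  fold h.
  apply (Rmult_le_reg_l (2 * f v)). lra.
  replace (2 * f v * ((OmegaPsi n adj dpsi f v + Lap n adj f v * DeltaPsi n adj psi f v / f v - Lap n adj h v / f v) / 2))
    with (f v * OmegaPsi n adj dpsi f v + Lap n adj f v * DeltaPsi n adj psi f v - Lap n adj h v) by (field; lra).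
  replace (2 * 0 / d) with 0 in HS by (field; lra).
  unfold h in HS |- *.
  replace (2 * f v * (/ d * DeltaPsi n adj psi f v ^ 2)) with (f v * DeltaPsi n adj psi f v * (2 / d * DeltaPsi n adj psi f v)) by (field; lra).
  lra.
Qed.
End Main.


Theorem mainTheorem8 (psi dpsi : R -> R)
  (Hpsi : forall x, 0 < x -> derivable_pt_lim psi x (dpsi x))
  (Hdpsi : forall x, 0 < x -> continuity_pt dpsi x)
  (d : R) (Hd : 0 < d)
  (n : nat) (adj : nat -> nat -> bool) (Hg : is_graph n adj) :
  (CDpsi n adj psi dpsi d <->
   (forall f, posfun n f -> forall t, 0 <= t -> forall v, (v < n)%nat ->
      heat n adj t f v * DeltaPsi n adj psi (heat n adj t f) v
      >= heat n adj t (fun w => f w * DeltaPsi n adj psi f w) v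
         * (1 + 2 * t / d * DeltaPsi n adj psi (heat n adj t f) v)))
  /\
  (CDpsi n adj psi dpsi d ->
   forall f, posfun n f -> forall t, 0 < t -> forall v, (v < n)%nat ->
     - DeltaPsi n adj psi (heat n adj t f) v <= d / (2 * t)).
Proof.
  split.
  - split.
    + intros HCD f Hf t Ht v Hv.
      destruct (key psi dpsi Hpsi n adj d Hd f t v HCD Hf Ht Hv) as [_ K2]. lra.
    + intros H2 f Hf v Hv. apply (converse psi dpsi Hpsi n adj d Hd f v Hf Hv).
      intros t Ht. apply H2; auto.
  - intros HCD f Hf t Ht v Hv.
    destruct (key psi dpsi Hpsi n adj d Hd f t v HCD Hf (Rlt_le _ _ Ht) Hv) as [K1 K2].
    assert (Hc : 0 < heat n adj t f v) by (apply heat_pos; auto; lra).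
    set (c := heat n adj t f v) in *.
    set (x := DeltaPsi n adj psi (heat n adj t f) v) in *.
    set (B := heat n adj t (fun w => f w * DeltaPsi n adj psi f w) v) in *.
    destruct (Rle_or_lt (- x) (d / (2 * t))) as [Hle|Hlt]; auto.
    exfalso.
    assert (HF : 1 + 2 * t / d * x < 0).
    { assert (x < - (d / (2 * t))) by lra.
      assert (2 * t / d * x < 2 * t / d * (- (d / (2 * t)))).
      { apply Rmult_lt_compat_l; auto. apply Rdiv_lt_0_compat; lra. }
      replace (2 * t / d * - (d / (2 * t))) with (-1) in H0 by (field; lra). lra. }
    assert (Hx : x < 0).
    { assert (0 < d / (2 * t)) by (apply Rdiv_lt_0_compat; lra). lra. }
    set (y := 2 * t / d) in *.
    assert (Hy : 0 < y) by (unfold y; apply Rdiv_lt_0_compat; lra).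
    assert (H1 : 0 <= (c * x - B) * (- (1 + y * x))) by (apply Rmult_le_pos; lra).
    assert (H3 : c * x * (1 + y * x) <= c * x) by nra.
    assert (H4 : 0 < c * y) by (apply Rmult_lt_0_compat; auto).
    assert (H5 : 0 < x * x) by nra.
    assert (H6 : 0 < c * y * (x * x)) by (apply Rmult_lt_0_compat; auto).
    nra.
Qed.
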